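(* Let $a_0,a_1,a_2$ be complex numbers with $a_1\neq 0$ and $a_2\neq 0$. Let $(F(n,k))_{n\ge 0,\,k\in\mathbb{Z}}$ be defined by $F(0,0)=1$, $F(0,k)=0$ for $k\neq 0$, $F(n,k)=0$ for $k<0$, and for $n\ge 1$ and all $k$, \[ F(n,k)=(a_2 n+a_1 k+a_0)\,F(n-1,k)+F(n-1,k-1). \] Then for all integers $n,k\ge 0$, \[ F(n,k)=\frac{1}{a_1^k\,k!}\sum_{j=0}^{k}(-1)^{k-j}\binom{k}{j}\prod_{r=1}^{n}\bigl(a_0+a_1 j+r a_2\bigr). \]
   Context: For $n=0$ the empty product equals $1$. *)

(* Defs.v *)
From mathcomp Require Import all_boot all_order all_algebra.
From mathcomp Require Import complex.
From mathcomp Require Import reals.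
Set Implicit Arguments. Unset Strict Implicit. Unset Printing Implicit Defensive.
Import Order.TTheory GRing.Theory Num.Theory.
Local Open Scope ring_scope.

Fixpoint Farr (C : fieldType) (a0 a1 a2 : C) (n : nat) (k : int) : C :=
  match n with
  | 0%N => if k == 0 then 1 else 0
  | m.+1 => if (k < 0)%R then 0 else
      (a2 * (m.+1)%:R + a1 * k%:~R + a0) * Farr a0 a1 a2 m k
      + Farr a0 a1 a2 m (k - 1)
  end.

(* Main.v *)
Require Import Defs.
From mathcomp Require Import all_boot all_order all_algebra.
From mathcomp Require Import ring.
From mathcomp Require Import complex.
From mathcomp Require Import reals.
Import Order.TTheory GRing.Theory Num.Theory.
Local Open Scope ring_scope.

Section K.
Variables (C : fieldType) (a0 a1 a2 : C).
Let P n (j : nat) := \prod_(1 <= r < n.+1) (a0 + a1 * (j%:R) + r%:R * a2).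
Let S n k := \sum_(j < k.+1) ((-1) ^+ (k - j) * ('C(k, j))%:R * P n j).

Lemma Farr_neg1 n : Farr a0 a1 a2 n (-1) = 0.
Proof. by case: n. Qed.

Lemma key n k : Farr a0 a1 a2 n k%:Z * (a1 ^+ k * (k`!)%:R) = S n k.
Proof.
elim: n k => [|n IH] k.
  rewrite /S /P.
  under eq_bigr => j _ do rewrite big_geq // mulr1.
  case: k => [|k] /=.
    by rewrite big_ord1 !mulr1.
  have := exprDn (-1 : C) 1 k.+1.
  rewrite addNr expr0n /= => /esym.
  under eq_bigr => j _ do rewrite expr1n mulr1 -mulr_natr.
  by move=> ->; rewrite mul0r.
have PS j : P n.+1 j = P n j * (a0 + a1 * j%:R + n.+1%:R * a2).
  by rewrite /P big_nat_recr.
rewrite /=.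
have kz (m : nat) : (Posz m)%:~R = m%:R :> C by [].
rewrite kz.
case: k => [|k].
  rewrite sub0r Farr_neg1 addr0 -mulrA IH /S !big_ord1 /= PS subnn bin0; ring.
have -> : (Posz k.+1 - 1 = Posz k)%R by rewrite -addn1 PoszD addrK.
rewrite mulrDl -mulrA IH.
have -> : Farr a0 a1 a2 n k * (a1 ^+ k.+1 * (k.+1)`!%:R) = a1 * k.+1%:R * S n k.
  by rewrite -IH factS natrM exprS; ring.
rewrite /S.
under [RHS]eq_bigr => j _ do rewrite PS.
have E (j : 'I_k.+2) : a0 + a1 * j%:R + n.+1%:R * a2 = (a2 * n.+1%:R + a1 * k.+1%:R + a0) - a1 * (k.+1 - j)%:R.
  rewrite natrB; [ring | exact: ltn_ord j].
under [RHS]eq_bigr => j _ do rewrite E mulrBr mulrA.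
under [RHS]eq_bigr => j _ do rewrite mulrBr.
rewrite sumrB; congr (_ + _).
  rewrite mulr_sumr; apply: eq_bigr => j _; ring.
rewrite [X in _ = - X]big_ord_recr /= subnn mulr0 mulr0 addr0.
rewrite mulr_sumr -sumrN; apply: eq_bigr => j _ /=.
rewrite subSn; last exact: ltn_ord j.
rewrite exprS.
have H : (k.+1%:R * 'C(k,j)%:R : C) = 'C(k.+1,j)%:R * (k - j).+1%:R.
  by rewrite -!natrM mul_bin_down mulnC (subSn (ltn_ord j : (j <= k)%N)).
transitivity (a1 * ((-1)^+(k-j) * P n j) * (k.+1%:R * 'C(k,j)%:R)); first ring.
rewrite H; ring.
Qed.
End K.
Local Open Scope complex_scope.

Theorem mainTheorem1 (R : realType) (a0 a1 a2 : R[i]) :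
  a1 != 0 -> a2 != 0 ->
  forall n k : nat,
    Farr a0 a1 a2 n k%:Z =
    (a1 ^+ k * (k`!)%:R)^-1 *
    \sum_(j < k.+1) ((-1) ^+ (k - j) * ('C(k, j))%:R *
       \prod_(1 <= r < n.+1) (a0 + a1 * (j%:R) + r%:R * a2)).
Proof.
move=> a1nz _ n k.
have dnz : a1 ^+ k * (k`!)%:R != 0.
  by rewrite mulf_neq0 ?expf_neq0 // pnatr_eq0 -lt0n fact_gt0.
by rewrite -key [X in _ = _ * X]mulrC mulKf.
Qed.
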